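(* For $k\ge0$, let $S_k$ be the star signed graph with $k+1$ vertices and $k$ positive edges (all joining one center vertex to the $k$ other vertices). Then $X_{S_k}=\sum_{i=0}^k(-1)^i\binom{k}{i}p_{1,0}^{k-i}\,p_{i+1,0}$.
   Context: For a signed graph $\Sigma$ (finite graph with edge signs $\mathrm{sgn}(e)\in\{+,-\}$), a coloring $\kappa:V(\Sigma)\to\mathbb{Z}$ is proper if $\kappa(u)\ne\mathrm{sgn}(e)\kappa(v)$ for every edge $e$ with endpoints $u,v$, and $X_\Sigma=\sum_{\kappa\text{ proper}}\prod_{v}x_{\kappa(v)}$ in commuting variables $x_i$, $i\in\mathbb{Z}$. $p_{a,b}=\sum_{i\in\mathbb{Z}}x_i^ax_{-i}^b$. *)

(* Defs.v *)
From HB Require Import structures.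
From mathcomp Require Import all_boot all_order all_algebra.
From mathcomp Require Import mpoly.
Set Implicit Arguments. Unset Strict Implicit. Unset Printing Implicit Defensive.
Import Order.TTheory GRing.Theory Num.Theory.
Local Open Scope ring_scope.

(* A finite signed graph (loops and multiple edges allowed):
   vertices sV, edges sE, endpoints of each edge, and sign
   (true = positive, false = negative). *)
Record sgraph := SGraph {
  sV : finType;
  sE : finType;
  sends : sE -> sV * sV;
  ssgn : sE -> bool }.

Definition sgnz (b : bool) : int := if b then 1 else -1.

Definition proper (G : sgraph) (kappa : sV G -> int) : bool :=
  [forall e : sE G, kappa (sends e).1 != sgnz (ssgn e) * kappa (sends e).2].

(* Truncation to the variables x_{-N}, ..., x_N (all other x_i set to 0).
   The variable 'X_c, c : 'I_(2N+1), stands for x_{c - N}. *)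
Definition nvars (N : nat) : nat := (N.*2).+1.
Definition colval (N : nat) (c : 'I_(nvars N)) : int := (c : nat)%:Z - N%:Z.

(* Truncated chromatic symmetric function X_Sigma(x_{-N},...,x_N, 0, 0, ...). *)
Definition XSigmaN (G : sgraph) (N : nat) : {mpoly int[nvars N]} :=
  \sum_(kappa : {ffun sV G -> 'I_(nvars N)} | proper (fun v => colval (kappa v)))
     \prod_(v : sV G) 'X_(kappa v).

(* Truncated p_{a,b} = sum_{i in Z} x_i^a x_{-i}^b ; rev_ord c stands for x_{-(c-N)}. *)
Definition pN (N a b : nat) : {mpoly int[nvars N]} :=
  \sum_(c : 'I_(nvars N)) 'X_c ^+ a * 'X_(rev_ord c) ^+ b.

Definition star (k : nat) : sgraph :=
  @SGraph 'I_k.+1 'I_k (fun e => (ord0, lift ord0 e)) (fun _ => true).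

(* Main.v *)
Require Import Defs.
From HB Require Import structures.
From mathcomp Require Import all_boot all_order all_algebra.
From mathcomp Require Import mpoly.
From mathcomp Require Import ring.
Import Order.TTheory GRing.Theory Num.Theory.
Local Open Scope ring_scope.

Section S.
Variables (k N : nat).
Local Notation n := (nvars N).
Local Notation P := {mpoly int[n]}.

Definition G (c : 'I_n) (v : 'I_k.+1) (d : 'I_n) : P :=
  if v == ord0 then (if d == c then 'X_d else 0) else (if d != c then 'X_d else 0).

Lemma colval_inj : injective (@colval N).
Proof. by move=> a b; rewrite /colval => /addIr /eqP; rewrite eqz_nat => /eqP /val_inj. Qed.

Lemma liftne0 (e : 'I_k) : (lift (ord0 : 'I_k.+1) e == ord0) = false.
Proof. by rewrite eq_sym (negbTE (neq_lift _ _)). Qed.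

Lemma prodG (c : 'I_n) (kap : {ffun 'I_k.+1 -> 'I_n}) :
  \prod_v G c v (kap v) =
  if (kap ord0 == c) && [forall e : 'I_k, kap (lift ord0 e) != c]
  then \prod_v 'X_(kap v) else 0.
Proof.
rewrite big_ord_recl [in RHS]big_ord_recl /G eqxx.
case: eqP => [->|_]; last by rewrite mul0r.

case: forallP => [H|H] /=.
  congr (_ * _); apply: eq_bigr => e _.
  by rewrite H.
have [e He] : exists e, ~~ (kap (lift ord0 e) != c).
  by apply/existsP; rewrite -negb_forall; apply/forallP.
rewrite (bigD1 e) //= (negbTE He) mul0r mulr0 //.
Qed.

Lemma LHS_eq : XSigmaN (star k) N = \sum_c \prod_v \sum_d G c v d.
Proof.
under [RHS]eq_bigr do rewrite bigA_distr_bigA.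
rewrite exchange_big /XSigmaN big_mkcond /=; apply: eq_bigr => kap _.
rewrite (eq_bigr _ (fun c _ => prodG c kap)).
rewrite -big_mkcond /=.
have -> : Defs.proper (G:=star k) (fun v : 'I_k.+1 => colval (N:=N) (kap v))
   = [forall e, kap (lift ord0 e) != kap ord0].
  rewrite /proper; apply: eq_forallb => e /=; rewrite /sgnz mul1r.
  by rewrite (inj_eq colval_inj) eq_sym.
case H: [forall e, kap (lift ord0 e) != kap ord0].
  rewrite (big_pred1 (kap ord0)) // => c /=.
  by rewrite [RHS]eq_sym; case: eqP => [<-|] //; rewrite H eqxx.
by rewrite big_pred0 // => c; case: eqP => // <-; rewrite H.
Qed.

Lemma prod_sumG (c : 'I_n) :
  \prod_v \sum_d G c v d = 'X_c * (\sum_d 'X_d - 'X_c) ^+ k.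
Proof.
rewrite big_ord_recl /G eqxx -big_mkcond big_pred1_eq; congr (_ * _).
rewrite (eq_bigr (fun _ => \sum_d 'X_d - 'X_c)) ?prodr_const ?card_ord // => e _.
by rewrite liftne0 -big_mkcond [in RHS](bigD1 c) //= addrC addrK.
Qed.

Lemma pN10 : pN N 1 0 = \sum_d 'X_d.
Proof. by apply: eq_bigr => d _; rewrite expr0 mulr1 expr1. Qed.
Lemma pNi0 i : pN N i 0 = \sum_d 'X_d ^+ i.
Proof. by apply: eq_bigr => d _; rewrite expr0 mulr1. Qed.

End S.

Theorem lemma6p4 (k N : nat) :
  XSigmaN (star k) N =
  \sum_(i < k.+1)
     ((-1) ^+ i * ('C(k, i))%:R) *: (pN N 1 0 ^+ (k - i) * pN N i.+1 0).
Proof.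
rewrite LHS_eq.
under eq_bigr do rewrite prod_sumG.
rewrite pN10; set S := \sum_d 'X_d.
under eq_bigr do rewrite exprBn mulr_sumr.
rewrite exchange_big /=; apply: eq_bigr => i _.
rewrite pNi0 mulr_sumr scaler_sumr; apply: eq_bigr => c _.
rewrite -[X in X *: _]intz scaler_int exprS.
rewrite /S; move: (\sum_d _) ('X_c) => s x; move: s x; generalize (nvars N) => m s x.
rewrite -mulrzr intrM rmorphXn rmorphN1 rmorph_nat.
rewrite -mulr_natr.
ring.
Qed.
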